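(* A $\mathbb{B}$-topological space $(X,\tau)$ is $R_1$ if and only if both topological spaces $(X,\tau[tt])$ and $(X,\tau[ff])$ are $R_1$. Consequently, $(X,\tau)$ is Hausdorff if and only if $(X,\tau[tt])$ and $(X,\tau[ff])$ are $R_1$ and the topological space $(X,\tau[tt]\vee\tau[ff])$ is $T_0$.
   Context: $\mathbb{B}=\{0,1,tt,ff\}$ is the four-element Boolean algebra with bottom $0$, top $1$, and $tt,ff$ incomparable complements; $\neg$ its complement, $a\to b=\neg a\vee b$. A $\mathbb{B}$-topology on $X$ is $\tau\subseteq\mathbb{B}^X$ containing all constant maps and closed under arbitrary pointwise joins and finite pointwise meets; $\mu\in\mathbb{B}^X$ is closed if $\neg\mu\in\tau$. $\tau[b]=\{\lambda[b]:\lambda\in\tau\}$, $\lambda[b]=\{x:\lambda(x)\ge b\}$; $\tau[tt]\vee\tau[ff]$ is the topology generated by their union. Specialization $\mathbb{B}$-order: $\Omega(\tau)(x,y)=\bigwedge_{\lambda\in\tau}(\lambda(x)\to\lambda(y))$. The product $(X,\tau)\times(X,\tau)$ is $X\times X$ with the $\mathbb{B}$-topology generated by the constants and $\{\lambda\circ\pi_1,\lambda\circ\pi_2:\lambda\in\tau\}$. $(X,\tau)$ is $R_1$ if $\Omega(\tau)\colon X\times X\to\mathbb{B}$ is a closed set of $(X,\tau)\times(X,\tau)$; $T_0$ if $\Omega(\tau)(x,y)=1=\Omega(\tau)(y,x)$ implies $x=y$; Hausdorff if $T_0$ and $R_1$. A topological space is $R_1$ if any two points with distinct closures of singletons have disjoint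 neighbourhoods. *)

(* Defs.v *)
(* Sets are predicates X -> Prop; classical logic is used to
   define arbitrary joins/meets in the four-element Boolean algebra. *)
From Stdlib Require Import Classical ClassicalEpsilon.

Inductive B : Type := b0 | b1 | btt | bff.

Definition Ble (a b : B) : Prop :=
  match a, b with
  | b0, _ => True
  | _, b1 => True
  | btt, btt => True
  | bff, bff => True
  | _, _ => False
  end.

Definition Bneg (a : B) : B :=
  match a with b0 => b1 | b1 => b0 | btt => bff | bff => btt end.

Definition Bjoin (a b : B) : B :=
  match a, b with
  | b0, c => c | c, b0 => c
  | b1, _ => b1 | _, b1 => b1
  | btt, btt => btt | bff, bff => bff
  | _, _ => b1
  end.

Definition Bmeet (a b : B) : B := Bneg (Bjoin (Bneg a) (Bneg b)).

Definition Bimp (a b : B) : B := Bjoin (Bneg a) b.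

Definition pdec (P : Prop) : bool :=
  if excluded_middle_informative P then true else false.

Definition Bof (t f : bool) : B :=
  match t, f with
  | true, true => b1 | true, false => btt | false, true => bff | false, false => b0
  end.

(** Supremum / infimum of an arbitrary subset S of B (B is a complete lattice):
    sup S >= tt iff some element of S is >= tt, etc. *)
Definition Bsup (S : B -> Prop) : B :=
  Bof (pdec (exists b, S b /\ Ble btt b)) (pdec (exists b, S b /\ Ble bff b)).

Definition Binf (S : B -> Prop) : B :=
  Bof (pdec (forall b, S b -> Ble btt b)) (pdec (forall b, S b -> Ble bff b)).

Definition is_Btopology {X : Type} (tau : (X -> B) -> Prop) : Prop :=
  (forall c : B, tau (fun _ => c)) /\
  (forall Lam : (X -> B) -> Prop, (forall l, Lam l -> tau l) ->
     tau (fun x => Bsup (fun b => exists l, Lam l /\ l x = b))) /\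
  (forall l m, tau l -> tau m -> tau (fun x => Bmeet (l x) (m x))).

Definition Bclosed {X : Type} (tau : (X -> B) -> Prop) (mu : X -> B) : Prop :=
  tau (fun x => Bneg (mu x)).

Definition Bgenerated {X : Type} (S : (X -> B) -> Prop) : (X -> B) -> Prop :=
  fun l => forall T, is_Btopology T -> (forall m, S m -> T m) -> T l.

Definition Bprod {X : Type} (tau : (X -> B) -> Prop) : (X * X -> B) -> Prop :=
  Bgenerated (fun m =>
    (exists c : B, m = fun _ => c) \/
    (exists l, tau l /\ m = fun p => l (fst p)) \/
    (exists l, tau l /\ m = fun p => l (snd p))).

Definition Omega {X : Type} (tau : (X -> B) -> Prop) : X * X -> B :=
  fun p => Binf (fun b => exists l, tau l /\ b = Bimp (l (fst p)) (l (snd p))).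

Definition B_R1 {X : Type} (tau : (X -> B) -> Prop) : Prop :=
  Bclosed (Bprod tau) (Omega tau).

Definition B_T0 {X : Type} (tau : (X -> B) -> Prop) : Prop :=
  forall x y : X, Omega tau (x, y) = b1 -> Omega tau (y, x) = b1 -> x = y.

Definition B_Hausdorff {X : Type} (tau : (X -> B) -> Prop) : Prop :=
  B_T0 tau /\ B_R1 tau.

Definition is_topology {X : Type} (T : (X -> Prop) -> Prop) : Prop :=
  T (fun _ => True) /\
  (forall F : (X -> Prop) -> Prop, (forall U, F U -> T U) ->
     T (fun x => exists U, F U /\ U x)) /\
  (forall U V, T U -> T V -> T (fun x => U x /\ V x)).

(** tau[b] = { lambda[b] : lambda in tau }, lambda[b] = { x | lambda x >= b }. *)
Definition cut {X : Type} (tau : (X -> B) -> Prop) (b : B) : (X -> Prop) -> Prop :=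
  fun U => exists l, tau l /\ forall x, U x <-> Ble b (l x).

Definition generated {X : Type} (S : (X -> Prop) -> Prop) : (X -> Prop) -> Prop :=
  fun U => forall T, is_topology T -> (forall V, S V -> T V) -> T U.

Definition top_join {X : Type} (T1 T2 : (X -> Prop) -> Prop) : (X -> Prop) -> Prop :=
  generated (fun U => T1 U \/ T2 U).

(** Closure of a singleton {x}: the points y every open neighbourhood of
    which contains x. *)
Definition cl1 {X : Type} (T : (X -> Prop) -> Prop) (x : X) : X -> Prop :=
  fun y => forall U, T U -> U y -> U x.

Definition top_R1 {X : Type} (T : (X -> Prop) -> Prop) : Prop :=
  forall x y : X, ~ (forall z, cl1 T x z <-> cl1 T y z) ->
    exists U V, T U /\ T V /\ U x /\ V y /\ (forall z, ~ (U z /\ V z)).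

Definition top_T0 {X : Type} (T : (X -> Prop) -> Prop) : Prop :=
  forall x y : X, x <> y ->
    exists U, T U /\ ((U x /\ ~ U y) \/ (U y /\ ~ U x)).

(* Main.v *)
Require Import Defs.
From Stdlib Require Import Classical ClassicalEpsilon FunctionalExtensionality Setoid.

Definition cc (k : bool) : B := if k then btt else bff.

Lemma Ble_comp a d : Ble a d <-> (forall k, Ble (cc k) a -> Ble (cc k) d).
Proof.
  split.
  - intros H k; destruct a, d, k; simpl in *; tauto.
  - intros H; pose proof (H true) as H1; pose proof (H false) as H2;
      destruct a, d; simpl in *; tauto.
Qed.

Lemma B_eq_comp a d : (forall k, Ble (cc k) a <-> Ble (cc k) d) -> a = d.
Proof.
  intros H; pose proof (H true) as H1; pose proof (H false) as H2;
  destruct a, d; simpl in *; try reflexivity; exfalso; tauto.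
Qed.

Lemma Bneg_c k a : Ble (cc k) (Bneg a) <-> ~ Ble (cc k) a.
Proof. destruct k, a; simpl; tauto. Qed.
Lemma Bmeet_c k a d : Ble (cc k) (Bmeet a d) <-> Ble (cc k) a /\ Ble (cc k) d.
Proof. destruct k, a, d; simpl; tauto. Qed.
Lemma Bimp_c k a d : Ble (cc k) (Bimp a d) <-> (Ble (cc k) a -> Ble (cc k) d).
Proof. destruct k, a, d; simpl; tauto. Qed.
Lemma b1_c k : Ble (cc k) b1.
Proof. destruct k; simpl; exact I. Qed.
Lemma cc_refl k : Ble (cc k) (cc k).
Proof. destruct k; simpl; exact I. Qed.
Lemma cc_c k k' : Ble (cc k') (cc k) -> k' = k.
Proof. intros H; destruct k, k'; simpl in H; try reflexivity; contradiction. Qed.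

Lemma Bsup_c k S : Ble (cc k) (Bsup S) <-> exists b, S b /\ Ble (cc k) b.
Proof.
  unfold Bsup, pdec.
  destruct (excluded_middle_informative (exists b, S b /\ Ble btt b)) as [H1|H1];
  destruct (excluded_middle_informative (exists b, S b /\ Ble bff b)) as [H2|H2];
  destruct k; simpl; firstorder.
Qed.

Lemma Binf_c k S : Ble (cc k) (Binf S) <-> forall b, S b -> Ble (cc k) b.
Proof.
  unfold Binf, pdec.
  destruct (excluded_middle_informative (forall b, S b -> Ble btt b)) as [H1|H1];
  destruct (excluded_middle_informative (forall b, S b -> Ble bff b)) as [H2|H2];
  destruct k; simpl; firstorder.
Qed.

Lemma Omega_c {X} k (tau : (X -> B) -> Prop) p :
  Ble (cc k) (Omega tau p) <->
  (forall l, tau l -> Ble (cc k) (l (fst p)) -> Ble (cc k) (l (snd p))).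
Proof.
  unfold Omega. rewrite Binf_c. split.
  - intros H l Hl Hx.
    assert (H0 : Ble (cc k) (Bimp (l (fst p)) (l (snd p)))) by (apply H; eauto).
    rewrite Bimp_c in H0; auto.
  - intros H b [l [Hl ->]]. rewrite Bimp_c. auto.
Qed.

Lemma cl1_c {X} k (tau : (X -> B) -> Prop) x y :
  cl1 (cut tau (cc k)) y x <->
  (forall l, tau l -> Ble (cc k) (l x) -> Ble (cc k) (l y)).
Proof.
  unfold cl1, cut. split.
  - intros H l Hl Hx. apply (H (fun z => Ble (cc k) (l z))); auto.
    exists l; split; [exact Hl | intro; tauto].
  - intros H U [l [Hl HU]] Hx. apply HU. apply H; auto. apply HU; auto.
Qed.

Lemma Omega_cl {X} k (tau : (X -> B) -> Prop) x y :
  Ble (cc k) (Omega tau (x, y)) <-> cl1 (cut tau (cc k)) y x.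
Proof. rewrite Omega_c, cl1_c. simpl. reflexivity. Qed.

Lemma Bgen_top {X} (S : (X -> B) -> Prop) : is_Btopology (Bgenerated S).
Proof.
  unfold Bgenerated; split; [|split].
  - intros c T [H1 [H2 H3]] HS. apply H1.
  - intros Lam HL T HT HS. pose proof HT as HT'. destruct HT' as [H1 [H2 H3]]. apply H2.
    intros l Hl. exact (HL l Hl T HT HS).
  - intros l m Hl Hm T HT HS. pose proof HT as HT'. destruct HT' as [H1 [H2 H3]].
    apply H3; [exact (Hl T HT HS) | exact (Hm T HT HS)].
Qed.

Definition Tstar {X} (tau : (X -> B) -> Prop) (m : X * X -> B) : Prop :=
  forall k p, Ble (cc k) (m p) -> exists l1 l2, tau l1 /\ tau l2 /\
    Ble (cc k) (l1 (fst p)) /\ Ble (cc k) (l2 (snd p)) /\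
    forall q, Ble (cc k) (l1 (fst q)) -> Ble (cc k) (l2 (snd q)) -> Ble (cc k) (m q).

Lemma Tstar_top {X} (tau : (X -> B) -> Prop) : is_Btopology tau -> is_Btopology (Tstar tau).
Proof.
  intros [Tc [Tj Tm]]. split; [|split].
  - intros c k p H. exists (fun _ => b1), (fun _ => b1).
    split; [apply Tc|]. split; [apply Tc|]. split; [apply b1_c|]. split; [apply b1_c|].
    intros; exact H.
  - intros Lam HL k p H. rewrite Bsup_c in H. destruct H as [b [[l [Hl Hlp]] Hb]]. subst b.
    destruct (HL l Hl k p Hb) as [l1 [l2 [H1 [H2 [H3 [H4 H5]]]]]].
    exists l1, l2. do 4 (split; auto). intros q Hq1 Hq2. rewrite Bsup_c.
    exists (l q). split; eauto.
  - intros l m Hl Hm k p H. rewrite Bmeet_c in H. destruct H as [Ha Hb].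
    destruct (Hl k p Ha) as [l1 [l2 [H1 [H2 [H3 [H4 H5]]]]]].
    destruct (Hm k p Hb) as [l1' [l2' [H1' [H2' [H3' [H4' H5']]]]]].
    exists (fun x => Bmeet (l1 x) (l1' x)), (fun x => Bmeet (l2 x) (l2' x)).
    split; [apply Tm; auto|]. split; [apply Tm; auto|].
    split; [rewrite Bmeet_c; auto|]. split; [rewrite Bmeet_c; auto|].
    intros q Hq1 Hq2. rewrite Bmeet_c in Hq1, Hq2 |- *.
    destruct Hq1, Hq2. auto.
Qed.

Lemma Bprod_Tstar {X} (tau : (X -> B) -> Prop) :
  is_Btopology tau -> forall m, Bprod tau m -> Tstar tau m.
Proof.
  intros Ht m Hm. pose proof Ht as Ht'. destruct Ht' as [Tc [Tj Tm]].
  apply Hm. apply Tstar_top; auto.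
  intros m' [[c ->]|[[l [Hl ->]]|[l [Hl ->]]]].
  - intros k p H. exists (fun _ => b1), (fun _ => b1).
    split; [apply Tc|]. split; [apply Tc|]. split; [apply b1_c|]. split; [apply b1_c|].
    intros; exact H.
  - intros k p H. cbv beta in H. exists l, (fun _ => b1).
    split; [exact Hl|]. split; [apply Tc|]. split; [exact H|]. split; [apply b1_c|].
    intros q H1 _; exact H1.
  - intros k p H. cbv beta in H. exists (fun _ => b1), l.
    split; [apply Tc|]. split; [exact Hl|]. split; [apply b1_c|]. split; [exact H|].
    intros q _ H1; exact H1.
Qed.

Lemma R1_fwd {X} (tau : (X -> B) -> Prop) k :
  is_Btopology tau -> B_R1 tau -> top_R1 (cut tau (cc k)).
Proof.
  intros Ht HR. unfold B_R1, Bclosed in HR.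
  pose proof (Bprod_Tstar _ Ht _ HR) as HS.
  assert (key : forall x y, ~ cl1 (cut tau (cc k)) y x -> exists U V,
    cut tau (cc k) U /\ cut tau (cc k) V /\ U x /\ V y /\ forall z, ~ (U z /\ V z)).
  { intros x y Hn.
    assert (Hb : Ble (cc k) (Bneg (Omega tau (x, y)))).
    { rewrite Bneg_c, Omega_cl. exact Hn. }
    destruct (HS k (x, y) Hb) as [l1 [l2 [H1 [H2 [H3 [H4 H5]]]]]].
    exists (fun z => Ble (cc k) (l1 z)), (fun z => Ble (cc k) (l2 z)).
    split. { exists l1; split; auto; intro; tauto. }
    split. { exists l2; split; auto; intro; tauto. }
    split; [exact H3|]. split; [exact H4|].
    intros z [Hz1 Hz2]. specialize (H5 (z, z) Hz1 Hz2). cbv beta in H5.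
    rewrite Bneg_c, Omega_cl in H5. apply H5. intros U _ HU; exact HU. }
  intros x y Hxy.
  destruct (classic (cl1 (cut tau (cc k)) y x)) as [Hyx|Hyx]; [|apply key; auto].
  destruct (classic (cl1 (cut tau (cc k)) x y)) as [Hxy'|Hxy'].
  - exfalso. apply Hxy. intro z. split; intros H U HU Hz.
    + exact (Hyx U HU (H U HU Hz)).
    + exact (Hxy' U HU (H U HU Hz)).
  - destruct (key y x Hxy') as [U [V [A [C [D [E F]]]]]].
    exists V, U. repeat split; auto. intros z [G I]. apply (F z); auto.
Qed.

Lemma R1_bwd {X} (tau : (X -> B) -> Prop) :
  is_Btopology tau -> top_R1 (cut tau (cc true)) -> top_R1 (cut tau (cc false)) ->
  B_R1 tau.
Proof.
  intros Ht H1 H2. assert (HR : forall k, top_R1 (cut tau (cc k))) by (intros []; auto).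
  assert (HP : is_Btopology (Bprod tau)) by (unfold Bprod; apply Bgen_top).
  destruct HP as [Pc [Pj Pm]].
  assert (Gen : forall m, ((exists c : B, m = fun _ => c) \/
    (exists l, tau l /\ m = fun p => l (fst p)) \/
    (exists l, tau l /\ m = fun p => l (snd p))) -> Bprod tau m).
  { intros m Hm T HT HS. apply HS; exact Hm. }
  unfold B_R1, Bclosed.
  pose (Lam := fun m => Bprod tau m /\ forall q, Ble (m q) (Bneg (Omega tau q))).
  assert (E : (fun x => Bneg (Omega tau x)) =
              fun x => Bsup (fun b => exists l, Lam l /\ l x = b)).
  { apply functional_extensionality. intros p. apply B_eq_comp. intros k.
    rewrite Bsup_c. split.
    - intros Hk. destruct p as [x y]. rewrite Bneg_c, Omega_cl in Hk.
      assert (Hd : ~ (forall z, cl1 (cut tau (cc k)) x z <-> cl1 (cut tau (cc k)) y z)).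
      { intro H. apply Hk. exact (proj1 (H x) (fun U _ HU => HU)). }
      destruct (HR k x y Hd) as [U [V [[l1 [Hl1 HU]] [[l2 [Hl2 HV]] [Ux [Vy Hdis]]]]]].
      pose (m := fun q : X * X => Bmeet (Bmeet (l1 (fst q)) (cc k)) (Bmeet (l2 (snd q)) (cc k))).
      exists (m (x, y)). split.
      + exists m. split; [|reflexivity]. split.
        * unfold m.
          apply (Pm (fun q => Bmeet (l1 (fst q)) (cc k)) (fun q => Bmeet (l2 (snd q)) (cc k))).
          -- apply (Pm (fun q => l1 (fst q)) (fun _ => cc k)); apply Gen.
             ++ right; left; exists l1; auto.
             ++ left; exists (cc k); reflexivity.
          -- apply (Pm (fun q => l2 (snd q)) (fun _ => cc k)); apply Gen.
             ++ right; right; exists l2; auto.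
             ++ left; exists (cc k); reflexivity.
        * intros [a b]. apply Ble_comp. intros k' Hm. unfold m in Hm; simpl in Hm.
          rewrite !Bmeet_c in Hm. destruct Hm as [[Ha Hk1] [Hb _]].
          apply cc_c in Hk1. subst k'. rewrite Bneg_c, Omega_cl. intro Hc.
          apply (Hdis b). split.
          -- apply (Hc U); [exists l1; split; auto | apply HU; exact Ha].
          -- apply HV; exact Hb.
      + unfold m; simpl. rewrite !Bmeet_c.
        split; split; try apply cc_refl; [apply HU; exact Ux | apply HV; exact Vy].
    - intros [b [[l [[Hl Hb] Hlp]] Hk]]. subst b.
      exact (proj1 (Ble_comp _ _) (Hb p) k Hk). }
  rewrite E. apply Pj. intros l [Hl _]; exact Hl.
Qed.

Lemma Omega_one {X} (tau : (X -> B) -> Prop) x y :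
  Omega tau (x, y) = b1 <-> forall k, cl1 (cut tau (cc k)) y x.
Proof.
  split.
  - intros H k. apply Omega_cl. rewrite H. apply b1_c.
  - intros H. apply B_eq_comp. intros k. split; intros _; [apply b1_c | apply Omega_cl; auto].
Qed.

Lemma join_incl {X} (tau : (X -> B) -> Prop) k U :
  cut tau (cc k) U -> top_join (cut tau (cc true)) (cut tau (cc false)) U.
Proof. intros HU T HT HS. apply HS. destruct k; [left|right]; exact HU. Qed.

Lemma T0_equiv {X} (tau : (X -> B) -> Prop) :
  B_T0 tau <-> top_T0 (top_join (cut tau (cc true)) (cut tau (cc false))).
Proof.
  split.
  - intros H x y Hne. apply NNPP; intro Hno. apply Hne, H; apply Omega_one;
      intros k U HU Hu; apply NNPP; intro Hn; apply Hno; exists U;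
      (split; [apply (join_incl _ k); exact HU | tauto]).
  - intros H x y Hxy Hyx. rewrite Omega_one in Hxy, Hyx.
    apply NNPP; intro Hne. destruct (H x y Hne) as [U [HU Hsep]].
    assert (Inv : (fun U => U x <-> U y) U).
    { apply HU.
      - split; [cbv beta; tauto|split].
        + intros F HF. cbv beta. split; intros [V [HV Hv]]; exists V; split; auto;
            pose proof (HF V HV) as HV'; cbv beta in HV'; tauto.
        + intros U1 U2 A C. cbv beta in *. tauto.
      - intros V [HV|HV]; cbv beta; split; intro Hv.
        + exact (Hxy true V HV Hv).
        + exact (Hyx true V HV Hv).
        + exact (Hxy false V HV Hv).
        + exact (Hyx false V HV Hv). }
    cbv beta in Inv. tauto.
Qed.

Theorem mainTheorem15 (X : Type) (tau : (X -> B) -> Prop) :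
  is_Btopology tau ->
  (B_R1 tau <-> top_R1 (cut tau btt) /\ top_R1 (cut tau bff)) /\
  (B_Hausdorff tau <->
     top_R1 (cut tau btt) /\ top_R1 (cut tau bff) /\
     top_T0 (top_join (cut tau btt) (cut tau bff))).
Proof.
  intros Ht.
  change (cut tau btt) with (cut tau (cc true)).
  change (cut tau bff) with (cut tau (cc false)).
  assert (R : B_R1 tau <-> top_R1 (cut tau (cc true)) /\ top_R1 (cut tau (cc false))).
  { split; [intro H; split; apply R1_fwd; auto | intros [A C]; apply R1_bwd; auto]. }
  split; [exact R|]. unfold B_Hausdorff. rewrite T0_equiv, R. tauto.
Qed.
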